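(* Let $\Gamma_1$ be the path graph with vertices $a,b,c,d$ and edges $\{a,b\},\{b,c\},\{c,d\}$. Then $\vdash_{\Gamma_1} a,c\rhd d\rightarrow (d,b\rhd a\rightarrow b,c\rhd a,d)$.
   Context: For a finite simple undirected graph $\Gamma=(V,E)$, the border of $U\subseteq V$ is ${\cal B}(U)=\{v\in U\mid (v,w)\in E\text{ for some }w\in V\setminus U\}$, and a cut $(U,W)$ is a partition $V=U\sqcup W$. Formulas are built from $\bot$, atoms $A\rhd B$ ($A,B\subseteq V$) and $\rightarrow$; $A,B$ denotes $A\cup B$ and a vertex $v$ stands for $\{v\}$. $\vdash_\Gamma\phi$ means $\phi$ is derivable by Modus Ponens from propositional tautologies and the axioms: Reflexivity $A\rhd B$ for $B\subseteq A$; Augmentation $A\rhd B\rightarrow A,C\rhd B,C$; Transitivity $A\rhd B\rightarrow(B\rhd C\rightarrow A\rhd C)$; Contiguity $A,B\rhd C\rightarrow{\cal B}(U),{\cal B}(W),B\rhd C$ for every cut $(U,W)$ of $\Gamma$ with $A\subseteq U$, $C\subseteq W$. *)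

(* Defs.v *)
From mathcomp Require Import all_boot.
Set Implicit Arguments. Unset Strict Implicit. Unset Printing Implicit Defensive.

(* A finite simple undirected graph: vertex finType V, edge relation E
   (assumed symmetric and irreflexive where relevant). *)

Section Logic.
Variables (V : finType) (E : rel V).

Definition border (U : {set V}) : {set V} :=
  [set v in U | [exists w, (w \notin U) && E v w]].

Inductive formula : Type :=
| Bot : formula
| Atom : {set V} -> {set V} -> formula
| Imp : formula -> formula -> formula.

Fixpoint eval (val : {set V} -> {set V} -> bool) (phi : formula) : bool :=
  match phi with
  | Bot => false
  | Atom A B => val A B
  | Imp p q => eval val p ==> eval val q
  end.

Definition tautology (phi : formula) : Prop :=
  forall val, eval val phi.

Inductive derivable : formula -> Prop :=
| D_taut phi : tautology phi -> derivable phi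
| D_refl (A B : {set V}) : B \subset A -> derivable (Atom A B)
| D_aug (A B C : {set V}) :
    derivable (Imp (Atom A B) (Atom (A :|: C) (B :|: C)))
| D_trans (A B C : {set V}) :
    derivable (Imp (Atom A B) (Imp (Atom B C) (Atom A C)))
| D_contig (U A B C : {set V}) :
    (* cut (U, W) with W = complement of U *)
    A \subset U -> C \subset ~: U ->
    derivable (Imp (Atom (A :|: B) C)
                   (Atom (border U :|: border (~: U) :|: B) C))
| D_mp phi psi : derivable (Imp phi psi) -> derivable phi -> derivable psi.

End Logic.

(* The path graph Gamma_1 on vertices a=0, b=1, c=2, d=3 with edges
   {a,b}, {b,c}, {c,d}. *)
Definition path4 : rel 'I_4 :=
  fun i j => (i.+1 == j :> nat) || (j.+1 == i :> nat).

Definition va : 'I_4 := @Ordinal 4 0 isT.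
Definition vb : 'I_4 := @Ordinal 4 1 isT.
Definition vc : 'I_4 := @Ordinal 4 2 isT.
Definition vd : 'I_4 := @Ordinal 4 3 isT.

(* Main.v *)
Require Import Defs.
From mathcomp Require Import all_boot.

Lemma mp2 {V : finType} {E : rel V} {p q} : derivable E (Imp p q) -> derivable E p -> derivable E q.
Proof. exact: D_mp. Qed.

Lemma ex4 (P : pred 'I_4) : [exists w, P w] = [|| P va, P vb, P vc | P vd].
Proof.
apply/existsP/idP => [[[[|[|[|[|i]]]] Hi] HP] //|].
- have E : Ordinal Hi = va by apply: val_inj.
  by rewrite E in HP; rewrite HP ?orbT.
- have E : Ordinal Hi = vb by apply: val_inj.
  by rewrite E in HP; rewrite HP ?orbT.
- have E : Ordinal Hi = vc by apply: val_inj.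
  by rewrite E in HP; rewrite HP ?orbT.
- have E : Ordinal Hi = vd by apply: val_inj.
  by rewrite E in HP; rewrite HP ?orbT.
- by case/or4P; eexists; eassumption.
Qed.

Ltac setcomp := apply/setP => -[[|[|[|[|i]]]] Hi] //; rewrite /border ?inE /= ?ex4 ?inE; by [].
Ltac subcomp := apply/subsetP => -[[|[|[|[|i]]]] Hi] //; rewrite ?inE; by [].

Theorem proposition2 :
  derivable path4
    (Imp (Atom [set va; vc] [set vd])
         (Imp (Atom [set vd; vb] [set va])
              (Atom [set vb; vc] [set va; vd]))).
Proof.
set P := Atom [set va; vc] [set vd].
set Q := Atom [set vd; vb] [set va].
set BC := [set vb; vc].
have H1 : derivable path4 (Imp P (Atom BC [set vd])).
  have -> : BC = border path4 [set va; vb] :|: border path4 (~: [set va; vb]) :|: [set vc].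
    by setcomp.
  have -> : P = Atom ([set va] :|: [set vc]) [set vd] by [].
  apply: D_contig; subcomp.
have H2 : derivable path4 (Imp Q (Atom BC [set va])).
  have -> : BC = border path4 [set vc; vd] :|: border path4 (~: [set vc; vd]) :|: [set vb].
    by setcomp.
  have -> : Q = Atom ([set vd] :|: [set vb]) [set va] by [].
  apply: D_contig; subcomp.
have H3 : derivable path4 (Imp (Atom BC [set va]) (Atom BC [set va; vb; vc])).
  have E1 : BC = BC :|: BC by rewrite setUid.
  have E2 : [set va; vb; vc] = [set va] :|: BC by setcomp.
  rewrite E2 {2}E1; exact: D_aug.
have H4 : derivable path4 (Imp (Atom BC [set vd]) (Atom [set va; vb; vc] [set va; vd])).
  have E2 : [set va; vb; vc] = BC :|: [set va] by setcomp.
  have E3 : [set va; vd] = [set vd] :|: [set va] by setcomp.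
  rewrite E2 E3; exact: D_aug.
have H5 := D_trans path4 BC [set va; vb; vc] [set va; vd].
set X1 := Atom BC [set vd] in H1 H4.
set X2 := Atom BC [set va] in H2 H3.
set Y2 := Atom BC [set va; vb; vc] in H3 H5.
set Y1 := Atom [set va; vb; vc] [set va; vd] in H4 H5.
set G := Atom BC [set va; vd] in H5 *.
have T : derivable path4 (Imp (Imp P X1) (Imp (Imp Q X2) (Imp (Imp X2 Y2) (Imp (Imp X1 Y1)
   (Imp (Imp Y2 (Imp Y1 G)) (Imp P (Imp Q G))))))).
  apply: D_taut => val /=.
  by case: (val _ [set vd]); case: (val _ [set va]); case: (val _ [set va; vb; vc]);
     case: (val [set va; vb; vc] _); case: (val BC [set va; vd]); case: (val BC [set vd]);
     case: (val BC [set va]).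
exact: (mp2 (mp2 (mp2 (mp2 (mp2 T H1) H2) H3) H4) H5).
Qed.
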